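(* Let $K$ be a number field of degree $n$ with $r_1$ real embeddings and $2r_2$ non-real complex embeddings, and let $\sigma_1,\dots,\sigma_n$ be its complex embeddings numbered so that $\sigma_i(K)\subset\mathbb{R}$ for $1\leqslant i\leqslant r_1$ and $\sigma_{j+r_2}=\overline{\sigma_j}$ for $r_1+1\leqslant j\leqslant r_1+r_2$. Embed $K$ into $V=\mathbb{R}^{r_1}\times\mathbb{C}^{r_2}$ via $x\mapsto(\sigma_1(x),\dots,\sigma_{r_1+r_2}(x))$, so that every fractional ideal of $O_K$ is a lattice in $V$. Let $\|\ \|$ be a norm on $V$ such that $\|xy\|\leqslant\|x\|\|y\|$ for all $x,y\in V$ (product taken componentwise). Let $k,\ell\in\{1,\dots,n\}$ with $k+\ell\geqslant n+1$, and let $I,J$ be fractional ideals of $O_K$. Then $\lambda_n(IJ)\leqslant\lambda_k(I)\lambda_\ell(J)$.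
   Context: For a lattice $\Gamma$ of the $n$-dimensional real vector space $V$ equipped with the norm $\|\ \|$ and $i\in\{1,\dots,n\}$, the $i$-th Minkowski minimum is $\lambda_i(\Gamma)=\min\{\max(\|e_1\|,\dots,\|e_i\|)\ ;\ (e_1,\dots,e_i)\text{ is a linearly independent family of elements of }\Gamma\}$. *)

(* Defs.v *)
From mathcomp Require Import all_boot all_order all_algebra all_field.
From mathcomp Require Import all_classical all_reals.
From mathcomp Require Import complex.
Set Implicit Arguments. Unset Strict Implicit. Unset Printing Implicit Defensive.
Import Order.TTheory GRing.Theory Num.Theory.
Local Open Scope ring_scope.
Local Open Scope classical_set_scope.

Definition V (R : realType) (r1 r2 : nat) : Type :=
  (('I_r1 -> R) * ('I_r2 -> R[i]))%type.

Definition vzero (R : realType) (r1 r2 : nat) : V R r1 r2 :=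
  (fun _ => 0, fun _ => 0).

Definition vadd (R : realType) (r1 r2 : nat) (x y : V R r1 r2) : V R r1 r2 :=
  (fun i => x.1 i + y.1 i, fun j => x.2 j + y.2 j).

Definition vscale (R : realType) (r1 r2 : nat) (a : R) (x : V R r1 r2)
  : V R r1 r2 :=
  (fun i => a * x.1 i, fun j => Complex a 0 * x.2 j).

Definition vmul (R : realType) (r1 r2 : nat) (x y : V R r1 r2) : V R r1 r2 :=
  (fun i => x.1 i * y.1 i, fun j => x.2 j * y.2 j).

Definition is_norm (R : realType) (r1 r2 : nat) (N : V R r1 r2 -> R) : Prop :=
  [/\ (forall x, N x = 0 -> x = vzero R r1 r2),
      (forall a x, N (vscale a x) = `|a| * N x) &
      (forall x y, N (vadd x y) <= N x + N y)].

Definition vlincomb (R : realType) (r1 r2 m : nat) (c : 'I_m -> R)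
  (e : 'I_m -> V R r1 r2) : V R r1 r2 :=
  (fun i => \sum_(j < m) c j * (e j).1 i,
   fun k => \sum_(j < m) Complex (c j) 0 * (e j).2 k).

Definition lin_indep (R : realType) (r1 r2 m : nat) (e : 'I_m -> V R r1 r2)
  : Prop :=
  forall c : 'I_m -> R, vlincomb c e = vzero R r1 r2 -> forall j, c j = 0.

(* i-th Minkowski minimum of the lattice L (a subset of V) w.r.t. N:
   the minimum (here written as the infimum, which is attained for a
   lattice) of max(N e_1, ..., N e_i) over linearly independent families
   (e_1, ..., e_i) of elements of L. *)
Definition minkowski_min (R : realType) (r1 r2 : nat) (N : V R r1 r2 -> R)
  (L : set (V R r1 r2)) (i : nat) : R :=
  inf [set r : R | exists e : 'I_i -> V R r1 r2,
         [/\ (forall j, L (e j)), lin_indep e &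
             r = \big[Num.max/0]_(j < i) N (e j)]].

Definition integral_elt (K : fieldExtType rat) (x : K) : Prop :=
  exists p : {poly int}, p \is monic /\ root (map_poly (fun z : int => z%:~R) p) x.

Definition frac_ideal (K : fieldExtType rat) (I : set K) : Prop :=
  [/\ I 0,
      (forall x y, I x -> I y -> I (x - y)),
      (forall a x, integral_elt a -> I x -> I (a * x)),
      (exists x, I x /\ x != 0) &
      (exists d : K, d != 0 /\ forall x, I x -> integral_elt (d * x))].

Definition ideal_mul (K : fieldExtType rat) (I J : set K) : set K :=
  [set z | exists (m : nat) (x y : 'I_m -> K),
     (forall j, I (x j) /\ J (y j)) /\ z = \sum_(j < m) x j * y j].

Definition embV (R : realType) (K : fieldExtType rat) (r1 r2 : nat)
  (sr : 'I_r1 -> {rmorphism K -> R[i]}) (sc : 'I_r2 -> {rmorphism K -> R[i]})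
  (x : K) : V R r1 r2 :=
  (fun i => complex.Re (sr i x), fun j => sc j x).

(* the full list of complex embeddings sigma_1, ..., sigma_n:
   inl i            ~ sigma_i            (1 <= i <= r1, real),
   inr (inl j)      ~ sigma_{r1+j}       (1 <= j <= r2),
   inr (inr j)      ~ sigma_{r1+r2+j} = conj sigma_{r1+j}. *)
Definition all_emb (R : realType) (K : fieldExtType rat) (r1 r2 : nat)
  (sr : 'I_r1 -> {rmorphism K -> R[i]}) (sc : 'I_r2 -> {rmorphism K -> R[i]})
  (a : 'I_r1 + ('I_r2 + 'I_r2)) : K -> R[i] :=
  match a with
  | inl i => fun x => sr i x
  | inr (inl j) => fun x => sc j x
  | inr (inr j) => fun x => (sc j x)^*
  end.

(* Main.v *)
Require Import Defs.
From mathcomp Require Import all_boot all_order all_algebra all_field.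
From mathcomp Require Import all_classical all_reals.
From mathcomp Require Import complex.
Import Order.TTheory GRing.Theory Num.Theory.
Local Open Scope ring_scope.
Local Open Scope classical_set_scope.
Import VectorInternalTheory.
From mathcomp Require Import zify ring lra.
Lemma ker_nz (F : fieldType) m n (A : 'M[F]_(m, n)) :
  (\rank A < m)%N -> exists c : 'rV_m, c != 0 /\ c *m A = 0.
Proof.
move=> hr; exists (nz_row (kermx A)); split.
  by rewrite nz_row_eq0 -mxrank_eq0 mxrank_ker subn_eq0 -ltnNge.
by apply/sub_kermxP; apply: nz_row_sub.
Qed.

Definition Qfree {K : fieldExtType rat} {m} (x : 'I_m -> K) :=
  forall c : 'I_m -> rat, \sum_i c i *: x i = 0 -> forall i, c i = 0.

Definition vmat {K : fieldExtType rat} {m} (x : 'I_m -> K) : 'M[rat]_(m, dim K) :=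
  \matrix_i v2r (x i).

Lemma vmat_mul {K : fieldExtType rat} {m} (x : 'I_m -> K) (c : 'rV[rat]_m) :
  c *m vmat x = v2r (\sum_i c 0 i *: x i).
Proof.
rewrite mulmx_sum_row linear_sum; apply: eq_bigr => i _.
by rewrite linearZ /vmat rowK.
Qed.

Lemma Qfree_rank {K : fieldExtType rat} {m} (x : 'I_m -> K) :
  Qfree x -> \rank (vmat x) = m.
Proof.
move=> hx; apply/eqP; rewrite eqn_leq rank_leq_row /=; rewrite leqNgt.
apply/negP => /ker_nz [c [hc0 hc]]; move: hc0; rewrite vmat_mul in hc.
have : \sum_i c 0 i *: x i = 0 by apply: v2r_inj; rewrite hc linear0.
move/hx => h; case/eqP; apply/rowP => i; by rewrite h mxE.
Qed.

Lemma rowfree_Qfree {K : fieldExtType rat} {m} (x : 'I_m -> K) :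
  row_free (vmat x) -> Qfree x.
Proof.
move=> hf c hc i.
have := @row_free_inj _ _ _ _ _ hf (\row_i c i) 0.
rewrite mul0mx vmat_mul.
have -> : \sum_i0 (\row_i c i) 0 i0 *: x i0 = \sum_i c i *: x i.
  by apply: eq_bigr => j _; rewrite mxE.
rewrite hc linear0 => /(_ erefl)/rowP/(_ i); by rewrite !mxE.
Qed.

Lemma Qfree_span {K : fieldExtType rat} (z : 'I_(dim K) -> K) :
  Qfree z -> forall w, exists d : 'I_(dim K) -> rat, w = \sum_j d j *: z j.
Proof.
move=> hz w.
have hu : vmat z \in unitmx by rewrite -row_free_unit /row_free Qfree_rank.
set dd := v2r w *m invmx (vmat z).
exists (fun j => dd 0 j); apply: v2r_inj.
by rewrite -vmat_mul /dd mulmxKV.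
Qed.
Lemma prod_span {K : fieldExtType rat} k l (x : 'I_k -> K) (y : 'I_l -> K) :
  (dim K < k + l)%N -> Qfree x -> Qfree y -> forall v : 'rV[rat]_(dim K),
  (forall i j, v2r (x i * y j) *m v^T = 0) -> v = 0.
Proof.
move=> hkl hx hy v hv.
pose C : 'M[rat]_(dim K, l) :=
  \matrix_(m, j) (v2r (r2v (delta_mx 0 m) * y j) *m v^T) 0 0.
have hC : forall w j, (v2r w *m C) 0 j = (v2r (w * y j) *m v^T) 0 0.
  move=> w j.
  have ew : w * y j = \sum_m (v2r w) 0 m *: (r2v (delta_mx 0 m) * y j).
    rewrite (eq_bigr (fun m => ((v2r w) 0 m *: r2v (delta_mx 0 m)) * y j));
      last by move=> *; rewrite scalerAl.
    rewrite -mulr_suml; congr (_ * _).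
    rewrite -[LHS]v2rK [in LHS](row_sum_delta (v2r w)) linear_sum.
    by apply: eq_bigr => m _; rewrite linearZ.
  rewrite [LHS]mxE ew linear_sum mulmx_suml summxE; apply: eq_bigr => m _.
  by rewrite linearZ -scalemxAl [RHS]mxE /C mxE.
have hEC : vmat x *m C = 0.
  apply/row_matrixP => i; rewrite row_mul row0 /vmat rowK; apply/rowP => j.
  by rewrite hC (hv i j) !mxE.
have hs : (vmat x <= kermx C)%MS by apply/sub_kermxP.
have hrk : (\rank C < l)%N.
  have := mxrankS hs; rewrite mxrank_ker Qfree_rank // => h.
  have := rank_leq_row C; move: h hkl; lia.
have [|d [hd0 hd]] := @ker_nz _ _ _ C^T; first by rewrite mxrank_tr.
have hCd : C *m d^T = 0 by rewrite -[C]trmxK -trmx_mul hd trmx0.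
pose g := \sum_j d 0 j *: y j.
have hg : g != 0.
  apply: contra hd0 => /eqP h; apply/eqP/rowP => j; by rewrite (hy _ h) mxE.
have hwg : forall w, (v2r (w * g) *m v^T) 0 0 = 0.
  move=> w.
  have -> : v2r (w * g) *m v^T = \sum_j d 0 j *: (v2r (w * y j) *m v^T).
    rewrite /g mulr_sumr linear_sum mulmx_suml; apply: eq_bigr => j _.
    by rewrite -scalerAr linearZ -scalemxAl.
  transitivity ((v2r w *m C *m d^T) 0 0); last by rewrite -mulmxA hCd mulmx0 mxE.
  rewrite summxE [RHS]mxE; apply: eq_bigr => j _.
  by rewrite mxE -hC [d^T _ _]mxE mulrC.
apply/rowP => m; rewrite [RHS]mxE.
have := hwg (r2v (delta_mx 0 m) / g); rewrite mulfVK // r2vK -rowE.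
by rewrite !mxE.
Qed.

Lemma prod_basis {K : fieldExtType rat} k l (x : 'I_k -> K) (y : 'I_l -> K) :
  (dim K < k + l)%N -> Qfree x -> Qfree y ->
  exists z : 'I_(dim K) -> K, Qfree z /\ forall i, exists a b, z i = x a * y b.
Proof.
move=> hkl hx hy.
pose T := ('I_k * 'I_l)%type.
pose P : 'M[rat]_(#|{: T}|, dim K) :=
  \matrix_m v2r (x (enum_val m).1 * y (enum_val m).2).
have hP : \rank P = dim K.
  apply/eqP; rewrite eqn_leq rank_leq_col leqNgt; apply/negP => hr.
  have [|v [hv0 hv]] := @ker_nz _ _ _ P^T; first by rewrite mxrank_tr.
  case/negP: hv0; apply/eqP; refine (@prod_span K k l x y hkl hx hy v _) => i j.
  have hPv : P *m v^T = 0 by rewrite -[P]trmxK -trmx_mul hv trmx0.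
  have := congr1 (row (enum_rank ((i, j) : T))) hPv.
  by rewrite row_mul row0 /P rowK enum_rankK.
have : exists f : 'I_(\rank P) -> 'I_#|{: T}|, row_free (rowsub f P).
  by exists (maxrankfun P); apply: maxrowsub_free.
rewrite hP => -[f hf].
exists (fun i => x (enum_val (f i)).1 * y (enum_val (f i)).2); split;
  last by move=> i; do 2 eexists.
apply: rowfree_Qfree.
suff -> : vmat (fun i => x (enum_val (f i)).1 * y (enum_val (f i)).2) = rowsub f P by [].
by apply/matrixP => i j; rewrite !mxE.
Qed.
Lemma intK_neq0 {K : fieldExtType rat} (c : int) : c != 0 -> (c%:~R : K) != 0.
Proof.
move=> hc; rewrite -(rmorph_int (in_alg K)) fmorph_eq0.
by rewrite intq_eq0.
Qed.

Lemma lead_integral {K : fieldExtType rat} (p0 : {poly int}) (y : K) :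
  p0 != 0 -> root (map_poly (fun z : int => z%:~R) p0) y ->
  integral_elt ((lead_coef p0)%:~R * y).
Proof.
move=> hp0 hroot.
set c := lead_coef p0.
have hc : c != 0 by rewrite lead_coef_eq0.
set s := size p0; set d := s.-1.
have hs : (1 < s)%N.
  rewrite ltnNge; apply/negP => hs1.
  have [c0 hc0] : exists c0, p0 = c0%:P.
    by exists p0`_0; apply: size1_polyC.
  move: hroot hc; rewrite /c hc0 lead_coefC map_polyC /= rootC => /eqP h hc'.
  by move: (@intK_neq0 K c0 hc'); rewrite h eqxx.
pose E i := if i == d then 1 else p0`_i * c ^+ (d.-1 - i).
have hE : E d != 0 by rewrite /E eqxx oner_neq0.
have hds : s = d.+1 by rewrite /d; lia.
have sP : size (\poly_(i < s) E i) = s by rewrite size_poly_eq // -hds.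
have hinj : injective (fun z : int => (z%:~R : K)).
  move=> z1 z2 /= h; apply: (@intr_inj rat).
  by apply: (fmorph_inj (in_alg K)); rewrite !rmorph_int.
exists (\poly_(i < s) E i); split.
  rewrite monicE lead_coef_poly; first by rewrite /E eqxx.
    by lia.
  exact: hE.
apply/rootP.
rewrite horner_coef (size_map_inj_poly hinj) ?mulr0z // sP.
transitivity ((c%:~R : K) ^+ d.-1 * (map_poly (fun z : int => (z%:~R : K)) p0).[y]);
  last by rewrite (rootP hroot) mulr0.
rewrite horner_coef (size_map_inj_poly hinj) ?mulr0z // mulr_sumr.
apply: eq_bigr => i _; rewrite !coef_map_id0 ?mulr0z // coef_poly ltn_ord /E.
case: eqP => [hid | hid].
  rewrite hid /= mul1r exprMn mulrA -exprSr prednK; last by lia.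
  by rewrite /c lead_coefE.
rewrite intrM rmorphXn exprMn -mulrA (mulrA (_ ^+ _)) -exprD subnK; last first.
  by have := ltn_ord i; lia.
by rewrite mulrCA.
Qed.

Lemma int_scale {K : fieldExtType rat} (y : K) :
  exists c : int, c != 0 /\ integral_elt (c%:~R * y).
Proof.
have [q qmon qroot] := alg_integral y.
have [q0 [a a0 hq]] := rat_poly_scale q.
have hq0 : q0 != 0.
  apply/eqP => h0; move: qmon; rewrite hq h0 map_poly0 scaler0 monicE lead_coef0.
  by rewrite eq_sym oner_eq0.
exists (lead_coef q0); split; first by rewrite lead_coef_eq0.
apply: lead_integral => //.
move: qroot; rewrite hq map_polyZ /root hornerZ mulf_eq0 => /orP [h | h].
  by move: h; rewrite fmorph_eq0 invr_eq0 intq_eq0 (negbTE a0).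
rewrite -map_poly_comp in h.
rewrite -(eq_map_poly (f := (in_alg K \o (fun z : int => (z%:~R : rat))))) //.
by move=> z; exact: (rmorph_int (in_alg K)).
Qed.
Lemma ReM_real (R : realType) (a : R) (w : R[i]) :
  complex.Re ((a%:C)%C * w) = a * complex.Re w.
Proof. by case: w => w1 w2 /=; rewrite mul0r subr0. Qed.

Lemma ceta (R : realType) (w : R[i]) : complex.Im w = 0 -> w = ((complex.Re w)%:C)%C.
Proof. by case: w => a b /= ->. Qed.

Lemma rmorph_scale (K : fieldExtType rat) (L : fieldType) (f : {rmorphism K -> L}) q x :
  f (q *: x) = ratr q * f x.
Proof. by rewrite -mulr_algl rmorphM -(fmorph_eq_rat (f \o in_alg K) q). Qed.

Lemma emb_rmorph (R : realType) (K : fieldExtType rat) (r1 r2 : nat)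
  (sr : 'I_r1 -> {rmorphism K -> R[i]}) (sc : 'I_r2 -> {rmorphism K -> R[i]}) a :
  exists f : {rmorphism K -> R[i]}, forall x, all_emb sr sc a x = f x.
Proof.
case: a => [i | [j | j]]; first by exists (sr i).
  by exists (sc j).
by exists (conjc \o sc j : {rmorphism K -> R[i]}).
Qed.

Lemma dedekind (K : nzRingType) (L : fieldType) (A : finType) (F : A -> K -> L)
  (hM : forall a x y, F a (x * y) = F a x * F a y) (h1 : forall a, F a 1 = 1)
  (hd : forall a b, a != b -> exists x, F a x != F b x) :
  forall c : A -> L, (forall x, \sum_a c a * F a x = 0) -> forall a, c a = 0.
Proof.
suff H : forall s : seq A, uniq s -> forall c : A -> L,
    (forall x, \sum_(a <- s) c a * F a x = 0) -> forall a, a \in s -> c a = 0.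
  move=> c hc a; apply: (H (index_enum A)).
  - exact: index_enum_uniq.
  - exact: hc.
  - exact: mem_index_enum.
elim=> [|b s IH] //= /andP [bs us] c hc.
have hs : forall a, a \in s -> c a = 0.
  move=> a0 ha0.
  have hab : a0 != b by apply: contraNneq bs => <-.
  have [y hy] := hd a0 b hab.
  have hsum : forall x, \sum_(a <- s) c a * (F a y - F b y) * F a x = 0.
    move=> x.
    have e1 := hc (x * y); have e2 := hc x.
    rewrite big_cons in e1; rewrite big_cons in e2.
    have -> : \sum_(a <- s) c a * (F a y - F b y) * F a x =
        \sum_(a <- s) c a * F a (x * y) - F b y * \sum_(a <- s) c a * F a x.
      rewrite mulr_sumr -sumrB; apply: eq_bigr => a _; rewrite hM; ring.
    have -> : \sum_(a <- s) c a * F a (x * y) = - (c b * F b (x * y)).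
      by apply/eqP; rewrite -addr_eq0 addrC e1.
    have -> : \sum_(a <- s) c a * F a x = - (c b * F b x).
      by apply/eqP; rewrite -addr_eq0 addrC e2.
    rewrite hM; ring.
  have := IH us (fun a => c a * (F a y - F b y)) hsum a0 ha0.
  by move/eqP; rewrite mulf_eq0 subr_eq0 (negbTE hy) orbF => /eqP.
move=> a; rewrite inE => /orP [/eqP -> | /hs //].
have := hc 1; rewrite big_cons big1_seq; last by move=> a0 /andP [_ /hs ->]; rewrite mul0r.
by rewrite h1 mulr1 addr0.
Qed.
Lemma emb_indep (R : realType) (K : fieldExtType rat) (r1 r2 : nat)
  (sr : 'I_r1 -> {rmorphism K -> R[i]}) (sc : 'I_r2 -> {rmorphism K -> R[i]})
  (hdeg : (r1 + 2 * r2)%N = dim K)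
  (hreal : forall i x, complex.Im (sr i x) = 0)
  (hdistinct : forall a b, (forall x, all_emb sr sc a x = all_emb sr sc b x) -> a = b)
  (z : 'I_(dim K) -> K) : Qfree z -> lin_indep (fun i => embV sr sc (z i)).
Proof.
move=> hz c hc j0; apply/eqP; apply/negP => hj0.
pose A := ('I_r1 + ('I_r2 + 'I_r2))%type.
have hA : #|{: A}| = dim K by rewrite !card_sum !card_ord -hdeg; lia.
pose ea (i : 'I_(dim K)) : A := enum_val (cast_ord (esym hA) i).
have ea_inj : injective ea by move=> i j /enum_val_inj /cast_ord_inj.
pose sig (i : 'I_(dim K)) := all_emb sr sc (ea i).
have [fs hfs] := choice (fun i : 'I_(dim K) => @emb_rmorph R K r1 r2 sr sc (ea i)).
have h1 := congr1 fst hc; have h2 := congr1 snd hc; rewrite /= in h1 h2.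
have hcol : forall i, \sum_j sig i (z j) * ((c j)%:C)%C = 0.
  move=> i; rewrite /sig; case: (ea i) => [i1 | [j1 | j1]] /=.
  - have /= h := congr1 (fun f => f i1) h1.
    transitivity (((\sum_j c j * complex.Re (sr i1 (z j)))%:C)%C); last by rewrite h.
    rewrite rmorph_sum; apply: eq_bigr => j _.
    by rewrite rmorphM mulrC {1}(@ceta R _ (hreal i1 (z j))).
  - have /= h := congr1 (fun f => f j1) h2.
    rewrite -[RHS]h; apply: eq_bigr => j _; by rewrite mulrC.
  - have /= h := congr1 (fun f => f j1) h2.
    transitivity ((\sum_j ((c j)%:C)%C * sc j1 (z j))^*)%C; last by rewrite h conjc0.
    rewrite rmorph_sum; apply: eq_bigr => j _.
    by rewrite rmorphM mulrC /= oppr0.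
pose M : 'M[R[i]]_(dim K) := \matrix_(i, j) sig i (z j).
pose cv : 'rV[R[i]]_(dim K) := \row_j ((c j)%:C)%C.
have hcv0 : cv != 0.
  apply/eqP => /rowP /(_ j0); rewrite !mxE => h.
  by apply: hj0; apply/eqP; apply: complexI; rewrite h rmorph0.
have hMc : M *m cv^T = 0.
  apply/matrixP => i k; rewrite ord1 !mxE -[RHS](hcol i).
  by apply: eq_bigr => j _; rewrite !mxE.
have hrk : (\rank M < dim K)%N.
  rewrite ltn_neqAle rank_leq_row andbT; apply/negP => /eqP hr.
  have hu : M \in unitmx by rewrite -row_free_unit /row_free hr.
  have := mulKmx hu cv^T; rewrite hMc mulmx0 => h.
  by move: hcv0; rewrite -trmx_eq0 -h eqxx.
have [u [hu0 huM]] := @ker_nz _ _ _ M hrk.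
have hdual : forall j, \sum_i u 0 i * fs i (z j) = 0.
  move=> j; have := congr1 (fun m : 'M[R[i]]_(1, dim K) => m 0 j) huM; rewrite !mxE => h.
  rewrite -[RHS]h; apply: eq_bigr => i _; by rewrite /M /sig mxE hfs.
have hall' : forall w, \sum_i u 0 i * fs i w = 0.
  move=> w; have [d ->] := @Qfree_span K z hz w.
  under eq_bigr do rewrite rmorph_sum mulr_sumr.
  rewrite exchange_big /=; apply: big1 => j _.
  under eq_bigr do rewrite rmorph_scale mulrCA.
  by rewrite -mulr_sumr hdual mulr0.
have hfun : forall i, u 0 i = 0.
  apply: (@dedekind K _ _ (fun i => fs i) _ _ _ (fun i => u 0 i) hall').
  - by move=> a x y; rewrite rmorphM.
  - by move=> a; rewrite rmorph1.
  - move=> a b hab; case: (boolp.pselect (exists x, fs a x != fs b x)) => // hne.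
    exfalso; move/negP: hab; apply; apply/eqP; apply: ea_inj; apply: hdistinct => x.
    change (sig a x = sig b x); rewrite /sig !hfs.
    by case: (fs a x =P fs b x) => // hx; case: hne; exists x; apply/eqP.
by move/negP: hu0; apply; apply/eqP/rowP => i; rewrite hfun mxE.
Qed.
Lemma indep_Qfree (R : realType) (K : fieldExtType rat) (r1 r2 : nat)
  (sr : 'I_r1 -> {rmorphism K -> R[i]}) (sc : 'I_r2 -> {rmorphism K -> R[i]})
  (hreal : forall i x, complex.Im (sr i x) = 0) m (x : 'I_m -> K) :
  lin_indep (fun i => embV sr sc (x i)) -> Qfree x.
Proof.
move=> hl q hq i.
have h0 : forall j, (ratr (q j) : R) = 0.
  apply: hl; rewrite /vlincomb /vzero /=; congr pair; apply: boolp.funext => t /=.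
  - transitivity (complex.Re (sr t (\sum_j q j *: x j))); last by rewrite hq rmorph0.
    rewrite rmorph_sum raddf_sum; apply: eq_bigr => j _.
    rewrite rmorph_scale -(fmorph_rat (real_complex R) (q j)). by symmetry; apply: ReM_real.
  - transitivity (sc t (\sum_j q j *: x j)); last by rewrite hq rmorph0.
    rewrite rmorph_sum; apply: eq_bigr => j _.
    by rewrite rmorph_scale -(fmorph_rat (real_complex R) (q j)).
by move/(_ i)/eqP: h0; rewrite fmorph_eq0 => /eqP.
Qed.

Lemma embV_mul (R : realType) (K : fieldExtType rat) (r1 r2 : nat)
  (sr : 'I_r1 -> {rmorphism K -> R[i]}) (sc : 'I_r2 -> {rmorphism K -> R[i]})
  (hreal : forall i x, complex.Im (sr i x) = 0) x y :
  embV sr sc (x * y) = vmul (embV sr sc x) (embV sr sc y).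
Proof.
rewrite /embV /vmul /=; congr pair; apply: boolp.funext => t /=; rewrite rmorphM //.
by rewrite {1}(@ceta R _ (hreal t x)) {1}(@ceta R _ (hreal t y)) -rmorphM.
Qed.

Lemma N_ge0 (R : realType) r1 r2 (N : V R r1 r2 -> R) : is_norm N -> forall x, 0 <= N x.
Proof.
case=> _ hs ht x.
have h0 : N (vzero R r1 r2) = 0.
  have -> : vzero R r1 r2 = vscale 0 x.
    rewrite /vscale /vzero; congr pair; apply: boolp.funext => t /=.
      by rewrite mul0r.
    by rewrite (_ : Complex (0 : R) 0 = 0) // mul0r.
  by rewrite hs normr0 mul0r.
have := ht x (vscale (-1) x).
have -> : vadd x (vscale (-1) x) = vzero R r1 r2.
  rewrite /vscale /vadd /vzero; congr pair; apply: boolp.funext => t /=.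
    by rewrite mulN1r subrr.
  have -> : Complex (-1 : R) 0 = -1 by apply/eqP; rewrite eq_complex /= oppr0 !eqxx.
  by rewrite mulN1r subrr.
rewrite h0 hs normrN normr1 mul1r; lra.
Qed.

Lemma lin_indep_widen (R : realType) r1 r2 m n (H : (m <= n)%N)
  (e : 'I_n -> V R r1 r2) :
  lin_indep e -> lin_indep (fun i : 'I_m => e (widen_ord H i)).
Proof.
move=> he c hc i.
pose c' (j : 'I_n) : R := oapp c 0 (insub (nat_of_ord j) : option 'I_m).
have hc'w : forall i0, c' (widen_ord H i0) = c i0.
  move=> i0; rewrite /c'; case: insubP => [u _ hu | ] /=.
    by congr c; apply: val_inj.
  by rewrite ltn_ord.
have hc'0 : forall j : 'I_n, ~~ (j < m)%N -> c' j = 0.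
  by move=> j hj; rewrite /c' insubF //; apply: negbTE.
have : vlincomb c' e = vzero R r1 r2.
  rewrite -hc /vlincomb; congr pair; apply: boolp.funext => t /=.
    rewrite (bigID (fun j : 'I_n => (j < m)%N)) /= [X in _ + X]big1 ?addr0;
      last by move=> j hj; rewrite hc'0 ?mul0r.
    rewrite (big_ord_narrow (F := fun j => c' j * (e j).1 t) H) /=.
    by apply: eq_bigr => i0 _; rewrite hc'w.
  rewrite (bigID (fun j : 'I_n => (j < m)%N)) /= [X in _ + X]big1 ?addr0;
    last by move=> j hj; rewrite hc'0 //; exact: mul0r.
  rewrite (big_ord_narrow (F := fun j => Complex (c' j) 0 * (e j).2 t) H) /=.
  by apply: eq_bigr => i0 _; rewrite hc'w.
by move/he => h; rewrite -hc'w h.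
Qed.

Lemma frac_free (K : fieldExtType rat) (I : set K) :
  frac_ideal I -> exists e : 'I_(dim K) -> K, (forall i, I (e i)) /\ Qfree e.
Proof.
case=> _ _ hmul [x0 [hx0 nx0]] _.
have [s hs] : exists s : seq K, forall k : 'I_(dim K) -> rat,
    \sum_i k i *: s`_i = 0 -> forall i, k i = 0.
  have /freeP hf := basis_free (vbasisP (fullv : {vspace K})).
  move: hf; set s := (tval (vbasis fullv)); rewrite dimvf => hf.
  by exists s.
have [cs hcs] := choice (fun i : 'I_(dim K) => int_scale (s`_i)).
exists (fun i => (cs i)%:~R * s`_i * x0); split.
  by move=> i; apply: hmul => //; exact: (hcs i).2.
move=> q hq i.
have : (\sum_j (q j * (cs j)%:~R) *: s`_j) * x0 = 0.
  rewrite -[RHS]hq mulr_suml; apply: eq_bigr => j _.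
  by rewrite -[in RHS](rmorph_int (in_alg K)) mulr_algl -!scalerAl scalerA.
move/eqP; rewrite mulf_eq0 (negbTE nx0) orbF => /eqP /hs /(_ i) /eqP.
by rewrite mulf_eq0 intq_eq0 (negbTE (hcs i).1) orbF => /eqP.
Qed.

Lemma inf_mul1 (R : realType) (A : set R) (c b : R) :
  A !=set0 -> 0 <= b -> (forall a, A a -> c <= a * b) -> c <= inf A * b.
Proof.
move=> [a0 ha0] hb hc.
move: hb; rewrite le_eqVlt => /orP [/eqP hb0 | hb0].
  by rewrite -hb0 mulr0; have := hc a0 ha0; rewrite -hb0 mulr0.
rewrite -ler_pdivrMr //; apply: lb_le_inf; first by exists a0.
by move=> a ha; rewrite ler_pdivrMr //; apply: hc.
Qed.

Lemma inf_ge0 (R : realType) (A : set R) :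
  A !=set0 -> (forall a, A a -> 0 <= a) -> 0 <= inf A.
Proof. by move=> hA h; apply: lb_le_inf => // a ha; apply: h. Qed.

Lemma inf_mul_le (R : realType) (A B : set R) (c : R) :
  A !=set0 -> B !=set0 -> (forall a, A a -> 0 <= a) -> (forall b, B b -> 0 <= b) ->
  (forall a b, A a -> B b -> c <= a * b) -> c <= inf A * inf B.
Proof.
move=> hA hB hA0 hB0 h.
rewrite mulrC; apply: inf_mul1 => //; first exact: inf_ge0.
move=> b hb; rewrite mulrC; apply: inf_mul1 => //; first exact: hB0.
by move=> a ha; apply: h.
Qed.
Theorem mainTheorem4 (R : realType) (K : fieldExtType rat) (r1 r2 : nat)
  (sr : 'I_r1 -> {rmorphism K -> R[i]}) (sc : 'I_r2 -> {rmorphism K -> R[i]})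
  (hdeg : (r1 + 2 * r2)%N = \dim {:K})
  (hreal : forall i x, complex.Im (sr i x) = 0)
  (hdistinct : forall a b, (forall x, all_emb sr sc a x = all_emb sr sc b x) -> a = b)
  (hall : forall f : {rmorphism K -> R[i]},
            exists a, forall x, f x = all_emb sr sc a x)
  (N : V R r1 r2 -> R) (hN : is_norm N)
  (hmul : forall x y, N (vmul x y) <= N x * N y)
  (k l : nat) (hk : (1 <= k <= \dim {:K})%N) (hl : (1 <= l <= \dim {:K})%N)
  (hkl : (\dim {:K} + 1 <= k + l)%N)
  (I J : set K) (hI : frac_ideal I) (hJ : frac_ideal J) :
  minkowski_min N (embV sr sc @` ideal_mul I J) (\dim {:K})
  <= minkowski_min N (embV sr sc @` I) k * minkowski_min N (embV sr sc @` J) l.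
Proof.
have hdK : \dim {:K} = dim K := dimvf K.
move: hdeg hk hl hkl; rewrite hdK => hdeg hk hl hkl.
have hN0 := @N_ge0 R r1 r2 N hN.
have hk' : (k <= dim K)%N by case/andP: hk.
have hl' : (l <= dim K)%N by case/andP: hl.
have ne : forall (L : set K) m, frac_ideal L -> (m <= dim K)%N ->
    [set r | exists e : 'I_m -> V R r1 r2,
         [/\ (forall j, (embV sr sc @` L) (e j)), lin_indep e &
             r = \big[Num.max/0]_(j < m) N (e j)]] !=set0.
  move=> L m hL hm.
  have [xe [hxe hQ]] := @frac_free K L hL.
  have hli := @emb_indep R K r1 r2 sr sc hdeg hreal hdistinct xe hQ.
  exists (\big[Num.max/0]_(j < m) N (embV sr sc (xe (widen_ord hm j)))).
  exists (fun j => embV sr sc (xe (widen_ord hm j))); split => //.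
    by move=> j; exists (xe (widen_ord hm j)).
  exact: (@lin_indep_widen R r1 r2 m (dim K) hm _ hli).
have pos : forall (L : set (V R r1 r2)) m r,
    [set r | exists e : 'I_m -> V R r1 r2,
         [/\ (forall j, L (e j)), lin_indep e &
             r = \big[Num.max/0]_(j < m) N (e j)]] r -> 0 <= r.
  by move=> L m r [e [_ _ ->]]; apply/bigmax_geP; left.
rewrite /minkowski_min; apply: inf_mul_le.
- exact: ne.
- exact: ne.
- exact: pos.
- exact: pos.
move=> a b [e [he hle ->]] [f [hf hlf ->]].
have hx' : forall j, exists x0, I x0 /\ embV sr sc x0 = e j.
  by move=> j; case: (he j) => x0 ? ?; exists x0.
have [x hx] := choice hx'.
have hy' : forall j, exists y0, J y0 /\ embV sr sc y0 = f j.
  by move=> j; case: (hf j) => y0 ? ?; exists y0.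
have [y hy] := choice hy'.
have ex : (fun j => embV sr sc (x j)) = e by apply: boolp.funext => j; exact: (hx j).2.
have ey : (fun j => embV sr sc (y j)) = f by apply: boolp.funext => j; exact: (hy j).2.
have hQx : Qfree x by apply: (@indep_Qfree R K r1 r2 sr sc hreal); rewrite ex.
have hQy : Qfree y by apply: (@indep_Qfree R K r1 r2 sr sc hreal); rewrite ey.
have hkl' : (dim K < k + l)%N by lia.
have [z [hz hzp]] := @prod_basis K k l x y hkl' hQx hQy.
have hlz := @emb_indep R K r1 r2 sr sc hdeg hreal hdistinct z hz.
apply: (@le_trans _ _ (\big[Num.max/0]_(j < dim K) N (embV sr sc (z j)))).
  apply: ge_inf.
    by exists 0 => r hr; apply: (pos _ _ _ hr).
  exists (fun j => embV sr sc (z j)); split => //.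
  move=> j; have [a' [b' ->]] := hzp j.
  exists (x a' * y b') => //.
  exists 1%N, (fun _ => x a'), (fun _ => y b'); split; last by rewrite big_ord1.
  by move=> _; split; [exact: (hx a').1 | exact: (hy b').1].
apply: bigmax_le; first by apply: mulr_ge0; apply/bigmax_geP; left.
move=> j _; have [a' [b' ->]] := hzp j.
rewrite embV_mul //; apply: le_trans (hmul _ _) _.
apply: ler_pM; [exact: hN0 | exact: hN0 | | ].
  by rewrite (hx a').2; exact: le_bigmax.
by rewrite (hy b').2; exact: le_bigmax.
Qed.
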